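(* Let $B_1,B_2\subseteq G''$ be two horoballs of type II in $(G'',\rho_c)$, i.e. $B_i=\{y''\in G'': d_{\theta''_i}(y'')\le\delta_i\}$ with $\theta''_i=(\theta_i,\theta'_i)$, $\theta_i\in\partial G$, $\theta'_i\in\partial G'$, $\delta_i\in\mathbb R$, and assume $B_1,B_2$ are nonempty. Then they have the infinite touching property: there exist sequences $(\xi^{(1)}_j)_{j\ge0}$ in $B_1$ and $(\xi^{(2)}_j)_{j\ge0}$ in $B_2$, each consisting of infinitely many distinct points, such that $\sup_j\rho_c(\xi^{(1)}_j,\xi^{(2)}_j)<\infty$.
   Context: $G,G'$ are finitely generated groups with neutral elements $o,o'$, word metrics $d,d'$ from Cayley graphs with respect to finite generating sets, growth rates $a=\lim v_n^{1/n}>1$, $a'=\lim (v'_n)^{1/n}>1$ ($v_n,v'_n$ the ball volumes), and $c:=\log a/\log a'$. $G''=G\times G'$ has origin $o''=(o,o')$ and metric $\rho_c((x,x'),(y,y'))=d(x,y)+d'(x',y')/c$. Horoboundary of $G$: with $d_x(y)=d(x,y)-d(x,o)$, $\overline G$ is the closure of $\{d_x: x\in G\}$ among $1$-Lipschitz functions vanishing at $o$ under pointwise convergence, $\partial G=\overline G\setminus G$, and $\theta\in\partial G$ has associated function $d_\theta$; similarly for $G'$. For $\theta\in\partial G$, $\theta'\in\partial G'$, $d_{(\theta,\theta')}(y,y'):=d_\theta(y)+d_{\theta'}(y')/c$. *)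

(* Defs.v *)
From Stdlib Require Export Reals List.
Open Scope R_scope.

Definition is_group {G : Type} (mul : G -> G -> G) (inv : G -> G) (o : G) : Prop :=
  (forall x y z, mul x (mul y z) = mul (mul x y) z) /\
  (forall x, mul o x = x) /\ (forall x, mul x o = x) /\
  (forall x, mul (inv x) x = o) /\ (forall x, mul x (inv x) = o).

Definition word_prod {G : Type} (mul : G -> G -> G) (o : G) (w : list G) : G :=
  fold_right mul o w.

(* d is the word metric (Cayley graph distance) for the finite set S:
   d x y is the minimal length of a word w in S ∪ S^{-1} with x * w = y.
   (The existence part forces S to generate G.) *)
Definition is_word_metric {G : Type} (mul : G -> G -> G) (inv : G -> G) (o : G)
  (S : list G) (d : G -> G -> nat) : Prop :=
  forall x y,
    (exists w, incl w (S ++ map inv S) /\ mul x (word_prod mul o w) = y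
               /\ length w = d x y) /\
    (forall w, incl w (S ++ map inv S) -> mul x (word_prod mul o w) = y ->
               (d x y <= length w)%nat).

Definition ball_volume {G : Type} (d : G -> G -> nat) (o : G) (n k : nat) : Prop :=
  exists l : list G, NoDup l /\ length l = k /\ forall x, In x l <-> (d o x <= n)%nat.

Definition growth_rate {G : Type} (d : G -> G -> nat) (o : G) (a : R) : Prop :=
  exists v : nat -> nat, (forall n, ball_volume d o n (v n)) /\
    Un_cv (fun n => Rpower (INR (v n)) (/ INR n)) a.

Definition dfun {G : Type} (d : G -> G -> nat) (o x : G) : G -> R :=
  fun y => INR (d x y) - INR (d x o).

(* h lies in the closure of {d_x : x in G} among 1-Lipschitz functions
   vanishing at o, for the topology of pointwise convergence (basic
   neighbourhoods: finitely many points, tolerance eps). *)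
Definition in_horo_closure {G : Type} (d : G -> G -> nat) (o : G) (h : G -> R) : Prop :=
  (forall y z, Rabs (h y - h z) <= INR (d y z)) /\ h o = 0 /\
  (forall (F : list G) (eps : R), 0 < eps ->
     exists x, forall y, In y F -> Rabs (dfun d o x y - h y) < eps).

(* h = d_theta for a point theta of the horoboundary ∂G = closure \ G *)
Definition in_horoboundary {G : Type} (d : G -> G -> nat) (o : G) (h : G -> R) : Prop :=
  in_horo_closure d o h /\ forall x : G, ~ (forall y, h y = dfun d o x y).

Definition rho_c {G G' : Type} (d : G -> G -> nat) (d' : G' -> G' -> nat) (c : R)
  (p q : G * G') : R :=
  INR (d (fst p) (fst q)) + INR (d' (snd p) (snd q)) / c.

Definition horoball2 {G G' : Type} (h : G -> R) (h' : G' -> R) (c delta : R)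
  (p : G * G') : Prop :=
  h (fst p) + h' (snd p) / c <= delta.

(* Main.v *)
Require Import Defs.
From Stdlib Require Import Reals Lra Lia List Classical ClassicalEpsilon ZArith.
Import ListNotations.
Open Scope R_scope.

Lemma min_list (A : Type) (f : A -> R) (L : list A) :
  (forall z, In z L -> f z > -1) -> exists m, 0 < m /\ forall z, In z L -> f z >= -1 + m.
Proof.
  induction L as [|a L IH]; intros H.
  - exists 1; split; [lra|intros z []].
  - destruct IH as [m [Hm Hz]]. { intros z Hz; apply H; right; auto. }
    assert (Ha := H a (or_introl eq_refl)).
    exists (Rmin m (f a + 1)); split.
    + apply Rmin_pos; lra.
    + intros z [<-|Hin].
      * pose proof (Rmin_r m (f a + 1)); lra.
      * pose proof (Rmin_l m (f a + 1)); specialize (Hz z Hin); lra.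
Qed.

Section W.
Variables (G : Type) (mul : G -> G -> G) (inv : G -> G) (o : G) (S0 : list G)
  (d : G -> G -> nat).
Hypothesis HG : is_group mul inv o.
Hypothesis Hd : is_word_metric mul inv o S0 d.

Lemma wp_app u v : word_prod mul o (u ++ v) = mul (word_prod mul o u) (word_prod mul o v).
Proof.
  destruct HG as [Ha [Hl _]].
  induction u as [|s u IH]; simpl. - now rewrite Hl. - now rewrite IH, Ha.
Qed.

Lemma d_tri x y z : (d x z <= d x y + d y z)%nat.
Proof.
  destruct HG as [Ha _].
  destruct (Hd x y) as [[u [Hu [Hu1 Hu2]]] _].
  destruct (Hd y z) as [[v [Hv [Hv1 Hv2]]] _].
  destruct (Hd x z) as [_ Hm].
  rewrite <- Hu2, <- Hv2, <- length_app. apply Hm.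
  - intros t Ht; apply in_app_or in Ht; destruct Ht; auto.
  - rewrite wp_app, Ha, Hu1; auto.
Qed.

Lemma d_refl x : d x x = 0%nat.
Proof.
  destruct HG as [_ [_ [Hr _]]].
  destruct (Hd x x) as [_ Hm]. specialize (Hm [] ltac:(intros t [])). simpl in Hm.
  rewrite Hr in Hm. specialize (Hm eq_refl). lia.
Qed.

Lemma inv_inv t : inv (inv t) = t.
Proof.
  destruct HG as [Ha [Hl [Hr [Hil Hir]]]].
  rewrite <- (Hr (inv (inv t))), <- (Hil t), Ha, Hil, Hl; auto.
Qed.

Lemma inv_T s : In s (S0 ++ map inv S0) -> In (inv s) (S0 ++ map inv S0).
Proof.
  intro H; apply in_app_or in H; apply in_or_app; destruct H as [H|H].
  - right; now apply in_map.
  - left. apply in_map_iff in H. destruct H as [t [<- Ht]]. now rewrite inv_inv.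
Qed.

Lemma step (h : G -> R) (Hh : in_horoboundary d o h) y :
  exists z, (d y z <= 1)%nat /\ h z <= h y - 1.
Proof.
  pose proof HG as HG0.
  destruct HG0 as [Ha [Hl [Hr [Hil Hir]]]].
  destruct Hh as [[Hlip [H0 Happ]] Hnot].
  set (T := S0 ++ map inv S0).
  set (L := map (fun s => mul y (inv s)) T).
  assert (HdL : forall z, In z L -> (d y z <= 1)%nat).
  { intros z Hz. unfold L in Hz. apply in_map_iff in Hz. destruct Hz as [s [<- Hs]].
    destruct (Hd y (mul y (inv s))) as [_ Hm].
    apply (Hm [inv s]).
    - intros t [<-|[]]. now apply inv_T.
    - simpl. now rewrite Hr. }
  apply NNPP; intro Hc.
  assert (Hall : forall z, In z L -> h z - h y > -1).
  { intros z Hz. destruct (Rgt_dec (h z - h y) (-1)) as [r|r]; auto.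
    exfalso; apply Hc. exists z. split; [auto|lra]. }
  destruct (min_list _ (fun z => h z - h y) L Hall) as [m [Hm Hmin]].
  destruct (not_all_ex_not _ _ (Hnot y)) as [w Hw].
  set (e := Rmin (m/3) (Rabs (h w - dfun d o y w))).
  assert (He : 0 < e).
  { unfold e. apply Rmin_pos. lra. apply Rabs_pos_lt. intro; apply Hw; lra. }
  destruct (Happ (y :: w :: L) e He) as [x Hx].
  assert (Hxy : x <> y).
  { intro; subst x. specialize (Hx w (or_intror (or_introl eq_refl))).
    rewrite Rabs_minus_sym in Hx. pose proof (Rmin_r (m/3) (Rabs (h w - dfun d o y w))).
    fold e in H. lra. }
  destruct (Hd x y) as [[w0 [Hinc [Hw0 Hlen]]] _].
  assert (Hne : w0 <> []).
  { intro; subst w0. simpl in Hw0. rewrite Hr in Hw0. auto. }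
  destruct (exists_last Hne) as [l' [s Hls]]. subst w0.
  set (z := mul x (word_prod mul o l')).
  assert (Hs : In s T). { apply Hinc. apply in_or_app; right; left; auto. }
  assert (Hzy : mul z s = y).
  { rewrite <- Hw0, wp_app. unfold z. simpl. rewrite Hr, Ha. auto. }
  assert (Hz : z = mul y (inv s)).
  { rewrite <- Hzy, <- Ha, Hir, Hr. auto. }
  assert (HzL : In z L). { rewrite Hz. unfold L. apply (in_map (fun s => mul y (inv s))). auto. }
  assert (Hdz : (d x z <= length l')%nat).
  { destruct (Hd x z) as [_ Hm']. apply Hm'; auto.
    intros t Ht; apply Hinc; apply in_or_app; auto. }
  rewrite length_app in Hlen. simpl in Hlen.
  assert (Hdz' : INR (d x z) <= INR (d x y) - 1).
  { rewrite <- Hlen, plus_INR. simpl. apply le_INR in Hdz. lra. }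
  pose proof (Hx y (or_introl eq_refl)) as Hxy1.
  pose proof (Hx z (or_intror (or_intror HzL))) as Hxz.
  specialize (Hmin z HzL).
  unfold dfun in Hxy1, Hxz.
  apply Rabs_def2 in Hxy1. apply Rabs_def2 in Hxz.
  pose proof (Rmin_l (m/3) (Rabs (h w - dfun d o y w))). fold e in H.
  lra.
Qed.

Lemma path (h : G -> R) (Hh : in_horoboundary d o h) y :
  exists g : nat -> G, g 0%nat = y /\
    (forall n, (d (g n) (g (S n)) <= 1)%nat) /\
    (forall n, h (g (S n)) <= h (g n) - 1).
Proof.
  set (nx := fun y => proj1_sig (constructive_indefinite_description _ (step h Hh y))).
  assert (Hnx : forall y, (d y (nx y) <= 1)%nat /\ h (nx y) <= h y - 1).
  { intro y0. unfold nx. destruct (constructive_indefinite_description _ _); auto. }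
  exists (fun n => Nat.iter n nx y). split; [reflexivity|split]; intro n; simpl; apply Hnx.
Qed.

Lemma path_far (g : nat -> G) (Hs : forall n, (d (g n) (g (S n)) <= 1)%nat) k K :
  (d (g k) (g (k + K)%nat) <= K)%nat.
Proof.
  induction K. - rewrite Nat.add_0_r, d_refl; lia.
  - pose proof (d_tri (g k) (g (k+K)%nat) (g (k + S K)%nat)).
    rewrite Nat.add_succ_r in *. specialize (Hs (k+K)%nat). lia.
Qed.

End W.

Lemma lip_up (G : Type) (d : G -> G -> nat) (f : G -> R)
  (Hf : forall y z, Rabs (f y - f z) <= INR (d y z)) (g : nat -> G)
  (Hs : forall n, (d (g n) (g (S n)) <= 1)%nat) n : f (g n) <= f (g 0%nat) + INR n.
Proof.
  induction n. - simpl; lra.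
  - rewrite S_INR. specialize (Hf (g n) (g (S n))). specialize (Hs n).
    apply le_INR in Hs. simpl in Hs. rewrite Rabs_minus_sym in Hf.
    pose proof (Rle_abs (f (g (S n)) - f (g n))). lra.
Qed.

Lemma desc (G : Type) (h : G -> R) (g : nat -> G)
  (Hs : forall n, h (g (S n)) <= h (g n) - 1) i k : h (g (i + k)%nat) <= h (g i) - INR k.
Proof.
  induction k. - rewrite Nat.add_0_r; simpl; lra.
  - rewrite Nat.add_succ_r, S_INR. specialize (Hs (i+k)%nat). lra.
Qed.

Lemma desc_inj (G : Type) (h : G -> R) (g : nat -> G)
  (Hs : forall n, h (g (S n)) <= h (g n) - 1) i j : g i = g j -> i = j.
Proof.
  intro E. destruct (Nat.lt_total i j) as [H|[H|H]]; auto; exfalso.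
  - replace j with (i + (j - i))%nat in E by lia.
    pose proof (desc G h g Hs i (j - i)). rewrite <- E in H0.
    assert (0 < INR (j - i)) by (apply lt_0_INR; lia). lra.
  - replace i with (j + (i - j))%nat in E by lia.
    pose proof (desc G h g Hs j (i - j)). rewrite E in H0.
    assert (0 < INR (i - j)) by (apply lt_0_INR; lia). lra.
Qed.

Lemma floor_nat r : 0 <= r -> exists m : nat, INR m <= r /\ r < INR m + 1.
Proof.
  intro Hr. destruct (archimed r) as [H1 H2].
  assert (Hz : (0 <= up r - 1)%Z).
  { assert (0 < IZR (up r)) by lra. apply lt_0_IZR in H. lia. }
  exists (Z.to_nat (up r - 1)). rewrite INR_IZR_INZ, Z2Nat.id by auto.
  rewrite minus_IZR. simpl. lra.
Qed.

Lemma upper_nat r : exists K : nat, r <= INR K.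
Proof.
  destruct (Rle_dec 0 r) as [H|H].
  - destruct (floor_nat r H) as [m [_ Hm]]. exists (S m). rewrite S_INR; lra.
  - exists 0%nat. simpl. lra.
Qed.

Theorem lemma4p2
  (G : Type) (mul : G -> G -> G) (inv : G -> G) (o : G) (S : list G)
  (d : G -> G -> nat) (a : R)
  (G' : Type) (mul' : G' -> G' -> G') (inv' : G' -> G') (o' : G') (S' : list G')
  (d' : G' -> G' -> nat) (a' : R)
  (HG : is_group mul inv o) (Hd : is_word_metric mul inv o S d)
  (Ha : growth_rate d o a) (Ha1 : 1 < a)
  (HG' : is_group mul' inv' o') (Hd' : is_word_metric mul' inv' o' S' d')
  (Ha' : growth_rate d' o' a') (Ha'1 : 1 < a')
  (h1 h2 : G -> R) (h1' h2' : G' -> R) (delta1 delta2 : R)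
  (Hh1 : in_horoboundary d o h1) (Hh1' : in_horoboundary d' o' h1')
  (Hh2 : in_horoboundary d o h2) (Hh2' : in_horoboundary d' o' h2')
  (HB1 : exists p, horoball2 h1 h1' (ln a / ln a') delta1 p)
  (HB2 : exists p, horoball2 h2 h2' (ln a / ln a') delta2 p) :
  exists xi1 xi2 : nat -> G * G',
    (forall i j, xi1 i = xi1 j -> i = j) /\
    (forall i j, xi2 i = xi2 j -> i = j) /\
    (forall j, horoball2 h1 h1' (ln a / ln a') delta1 (xi1 j)) /\
    (forall j, horoball2 h2 h2' (ln a / ln a') delta2 (xi2 j)) /\
    exists M : R, forall j, rho_c d d' (ln a / ln a') (xi1 j) (xi2 j) <= M.
Proof.
  set (c := ln a / ln a').
  assert (Hc : 0 < c).
  { unfold c. assert (0 < ln a) by (rewrite <- ln_1; apply ln_increasing; lra).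
    assert (0 < ln a') by (rewrite <- ln_1; apply ln_increasing; lra).
    apply Rdiv_lt_0_compat; auto. }
  destruct HB1 as [[y1 y1'] HP0]. unfold horoball2 in HP0; simpl in HP0. fold c in HP0.
  destruct (path G mul inv o S d HG Hd h1 Hh1 y1) as [g [Hg0 [Hgs Hgd]]].
  destruct (path G' mul' inv' o' S' d' HG' Hd' h2' Hh2' y1') as [x [Hx0 [Hxs Hxd]]].
  assert (Hm : forall n, exists m : nat, INR m <= c * INR n /\ c * INR n < INR m + 1).
  { intro n. apply floor_nat. pose proof (pos_INR n). nra. }
  destruct (upper_nat (1 + c * (h2 y1 + h2' y1' / c - delta2))) as [K HK].
  set (m := fun n => proj1_sig (constructive_indefinite_description _ (Hm n))).
  assert (Hmp : forall n, INR (m n) <= c * INR n /\ c * INR n < INR (m n) + 1).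
  { intro n. unfold m. destruct (constructive_indefinite_description _ _); auto. }
  exists (fun n => (g n, x (m n))), (fun n => (g n, x (m n + K)%nat)).
  destruct Hh1 as [[Lh1 _] _]. destruct Hh2 as [[Lh2 _] _].
  destruct Hh1' as [[Lh1' _] _]. destruct Hh2' as [[Lh2' _] _].
  split; [|split; [|split; [|split]]].
  - intros i j E. injection E; intros. exact (desc_inj G h1 g Hgd i j H0).
  - intros i j E. injection E; intros. exact (desc_inj G h1 g Hgd i j H0).
  - intro n. unfold horoball2; simpl. fold c.
    pose proof (desc G h1 g Hgd 0 n) as D1. simpl in D1. rewrite Hg0 in D1.
    pose proof (lip_up G' d' h1' Lh1' x Hxs (m n)) as U1. rewrite Hx0 in U1.
    destruct (Hmp n) as [M1 M2].
    assert (h1' (x (m n)) / c <= h1' y1' / c + INR n).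
    { apply (Rmult_le_reg_l c); auto. unfold Rdiv.
      replace (c * (h1' (x (m n)) * / c)) with (h1' (x (m n))) by (field; lra).
      replace (c * (h1' y1' * / c + INR n)) with (h1' y1' + c * INR n) by (field; lra).
      lra. }
    lra.
  - intro n. unfold horoball2; simpl. fold c.
    pose proof (lip_up G d h2 Lh2 g Hgs n) as U2. rewrite Hg0 in U2.
    pose proof (desc G' h2' x Hxd 0 (m n + K)) as D2. simpl in D2. rewrite Hx0 in D2.
    rewrite plus_INR in D2.
    destruct (Hmp n) as [M1 M2].
    assert (h2' (x (m n + K)%nat) / c <= h2' y1' / c - INR n + (1 - INR K) / c).
    { apply (Rmult_le_reg_l c); auto. unfold Rdiv.
      replace (c * (h2' (x (m n + K)%nat) * / c)) with (h2' (x (m n + K)%nat)) by (field; lra).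
      replace (c * (h2' y1' * / c - INR n + (1 - INR K) * / c))
        with (h2' y1' - c * INR n + (1 - INR K)) by (field; lra).
      lra. }
    assert ((1 - INR K) / c <= delta2 - h2 y1 - h2' y1' / c).
    { apply (Rmult_le_reg_l c); auto. unfold Rdiv.
      replace (c * ((1 - INR K) * / c)) with (1 - INR K) by (field; lra).
      replace (c * (delta2 - h2 y1 - h2' y1' * / c)) with (c * (delta2 - h2 y1) - h2' y1') by (field; lra).
      replace (c * (h2 y1 + h2' y1' / c - delta2)) with (c * (h2 y1 - delta2) + h2' y1') in HK
        by (field; lra). lra. }
    lra.
  - exists (INR K / c). intro n. unfold rho_c; simpl. fold c.
    rewrite (d_refl G mul inv o S d HG Hd). simpl.
    pose proof (path_far G' mul' inv' o' S' d' HG' Hd' x Hxs (m n) K) as F.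
    apply le_INR in F. unfold Rdiv.
    assert (0 < / c) by (apply Rinv_0_lt_compat; auto). nra.
Qed.
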